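(* Let $X$ be a $T_1$ space with countable extent and $|X|<\mathfrak{b}$. Then $X$ is absolutely strongly star-Menger if and only if $X$ is selectively $(a)$.
   Context: All spaces are regular. $St(A,\mathcal{U})=\bigcup\{U\in\mathcal{U}:U\cap A\neq\emptyset\}$. $\mathfrak{b}$ is the bounding number. $X$ has countable extent if every closed discrete subset is countable. $X$ is absolutely strongly star-Menger if for every sequence $(\mathcal{U}_n:n\in\omega)$ of open covers and every dense $D\subseteq X$ there are finite $F_n\subseteq D$ with $\{St(F_n,\mathcal{U}_n):n\in\omega\}$ covering $X$. $X$ is selectively $(a)$ if for every sequence $(\mathcal{U}_n)$ of open covers and every dense $D\subseteq X$ there are $C_n\subseteq D$, closed and discrete in $X$, with $\{St(C_n,\mathcal{U}_n):n\in\omega\}$ covering $X$. *)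

(* Defs.v *)
From HB Require Import structures.
From mathcomp Require Import all_boot all_order all_algebra.
From mathcomp Require Import all_classical all_reals topology.
Set Implicit Arguments. Unset Strict Implicit. Unset Printing Implicit Defensive.
Local Open Scope classical_set_scope.

Definition closed_discrete {T : topologicalType} (C : set T) : Prop :=
  closed C /\ forall x, C x -> exists U : set T, [/\ open U, U x & U `&` C = [set x]].

Definition countable_extent (T : topologicalType) : Prop :=
  forall C : set T, closed_discrete C -> countable C.

Definition regular_sep (T : topologicalType) : Prop :=
  forall (F : set T) (x : T), closed F -> ~ F x ->
    exists U V : set T, [/\ open U, open V, U x, F `<=` V & U `&` V = set0].

Definition T1_space (T : topologicalType) : Prop :=
  forall x y : T, x <> y -> exists U : set T, [/\ open U, U x & ~ U y].

(* |T| < b  (b = bounding number): every family of functions omega -> omega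
   indexed by T (i.e. of size <= |T|) is <=*-bounded by a single function. *)
Definition card_lt_bounding (T : Type) : Prop :=
  forall f : T -> (nat -> nat), exists g : nat -> nat,
    forall t : T, exists N : nat, forall n : nat, (N <= n)%N -> (f t n <= g n)%N.

Definition open_cover {T : topologicalType} (U : set (set T)) : Prop :=
  (forall u, U u -> open u) /\ \bigcup_(u in U) u = setT.

Definition St {T : Type} (A : set T) (U : set (set T)) : set T :=
  \bigcup_(u in [set u | U u /\ u `&` A !=set0]) u.

Definition absolutely_strongly_star_Menger (T : topologicalType) : Prop :=
  forall Us : nat -> set (set T), (forall n, open_cover (Us n)) ->
  forall D : set T, dense D ->
  exists F : nat -> set T, (forall n, finite_set (F n) /\ F n `<=` D) /\
    \bigcup_(n in setT) St (F n) (Us n) = setT.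

Definition selectively_a (T : topologicalType) : Prop :=
  forall Us : nat -> set (set T), (forall n, open_cover (Us n)) ->
  forall D : set T, dense D ->
  exists C : nat -> set T, (forall n, C n `<=` D /\ closed_discrete (C n)) /\
    \bigcup_(n in setT) St (C n) (Us n) = setT.

(* Main.v *)
Require Import Defs.
From mathcomp Require Import all_boot all_order all_algebra.
From mathcomp Require Import all_classical all_reals topology.
Local Open Scope classical_set_scope.

Lemma T1_closed1 (X : topologicalType) : T1_space X -> forall a : X, closed [set a].
Proof.
move=> hT a; rewrite -openC.
have : forall y : X, exists U : set X, y <> a -> [/\ open U, U y & ~ U a].
  move=> y; case: (pselect (y = a)) => [->|ya].
    by exists set0.
  have [U [oU Uy nUa]] := hT y a ya; by exists U.
move=> /choice [V hV].
have -> : ~` [set a] = \bigcup_(y in ~` [set a]) V y.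
  apply/seteqP; split => [y ya|y [z za Vz]].
    by exists y => //; case: (hV y ya).
  move=> ya; rewrite /= in ya; subst y; by case: (hV z za).
by apply: bigcup_open => y ya; case: (hV y ya).
Qed.

Lemma T1_finite_closed (X : topologicalType) : T1_space X ->
  forall F : set X, finite_set F -> closed F.
Proof.
move=> hT F fF.
have -> : F = \bigcup_(x in F) [set x].
  apply/seteqP; split => [y Fy|y [z Fz ->]] //; by exists y.
apply: closed_bigcup => // i _; exact: T1_closed1.
Qed.

Lemma T1_finite_cd (X : topologicalType) : T1_space X ->
  forall F : set X, finite_set F -> closed_discrete F.
Proof.
move=> hT F fF; split; first exact: T1_finite_closed.
move=> x Fx; exists (~` (F `\ x)); split.
- rewrite openC; apply: T1_finite_closed => //; exact: finite_setD.
- by move=> [_ /(_ erefl)].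
- apply/seteqP; split => y.
    move=> [H Fy]; apply: contrapT => yx; apply: H; by split.
  move=> /= ->; split => //; by move=> [].
Qed.

Theorem mainTheorem18 (X : topologicalType) :
  regular_sep X -> T1_space X -> countable_extent X -> card_lt_bounding X ->
  (absolutely_strongly_star_Menger X <-> selectively_a X).
Proof.
move=> _ hT hce hb; split.
  move=> hA Us hUs D dD; have [F [hF cov]] := hA Us hUs D dD.
  exists F; split => // n; have [fF FD] := hF n; split => //.
  exact: T1_finite_cd.
move=> hS Us hUs D dD.
have : forall k, exists E : set X, [/\ countable E, E `<=` D &
    forall x, exists e, E e /\ St [set e] (Us k) x].
  move=> k; have [C [hC cov]] := hS (fun _ => Us k) (fun _ => hUs k) D dD.
  exists (\bigcup_(m in setT) C m); split.
  - apply: bigcup_countable => // m _; apply: hce; by case: (hC m).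
  - move=> x [m _ Cx]; by case: (hC m) => + _; apply.
  - move=> x; have : (setT : set X) x by [].
    rewrite -cov => -[m _ [u [Uu [e [ue Ce]]] ux]].
    exists e; split; first by exists m.
    exists u => //; split => //; by exists e.
move=> /choice [E hE].
have : forall k, exists h : X -> nat, {in E k &, injective h}.
  move=> k; have [cE _ _] := hE k; exact/countable_injP.
move=> /choice [h hh].
have : forall p : X * nat, exists e, E p.2 e /\ St [set e] (Us p.2) p.1.
  by move=> [x k]; have [_ _ +] := hE k; apply.
move=> /choice [c hc].
have [g hg] := hb (fun x k => h k (c (x, k))).
exists (fun k => [set e | E k e /\ (h k e <= g k)%N]); split.
  move=> k; split; last first.
    move=> e [Ee _]; by have [_ + _] := hE k; apply.
  apply: (@card_le_finite _ _ _ `I_(g k).+1) => //.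
  apply/pcard_leP/injfunPex; exists (h k).
    by move=> e [_ le] /=; rewrite ltnS.
  move=> a b /set_mem [Ea _] /set_mem [Eb _] hab; apply: (hh k) => //; exact: mem_set.
apply/seteqP; split => // x _.
have [N hN] := hg x.
exists N => //.
have [Ec [u [Uu [e [ue ee]]] ux]] := hc (x, N).
rewrite /= in ee; subst e.
exists u => //; split => //; exists (c (x, N)); split => //; split => //.
exact: hN.
Qed.
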